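(* For integers $0\le a<b$ let $\Delta^{(odd)}_3([a,b))$ denote the number of odd evil integers in $[a,b)$ divisible by $3$ minus the number of odd odious integers in $[a,b)$ divisible by $3$. Then: 1) $\Delta^{(odd)}_3([0,2^n))=3^{\lfloor n/2\rfloor-1}$ for all integers $n\ge 2$. 2) For integers $n,m$: $$\Delta^{(odd)}_3([2^n,2^n+2^m))=\begin{cases}0, & n \text{ and } m \text{ even},\ 2\le m\le n-2,\\ 3^{\frac{m-2}{2}}, & n \text{ odd},\ m \text{ even},\ 2\le m\le n-1,\\ -3^{\frac{m-3}{2}}, & n \text{ even},\ m \text{ odd},\ 3\le m\le n-1,\\ 2\cdot 3^{\frac{m-3}{2}}, & n \text{ and } m \text{ odd},\ 3\le m\le n-2.\end{cases}$$ 3) For integers $n,m$: $$\Delta^{(odd)}_3([2^n+2^{n-2},\,2^n+2^{n-2}+2^m))=\begin{cases}-3^{\frac{m-2}{2}}, & n \text{ and } m \text{ even},\ 2\le m\le n-4,\\ 0, & n \text{ odd},\ m \text{ even},\ 2\le m\le n-3,\\ -2\cdot 3^{\frac{m-3}{2}}, & n \text{ even},\ m \text{ odd},\ 3\le m\le n-3,\\ 3^{\frac{m-3}{2}}, & n \text{ and } m \text{ odd},\ 3\le m\le n-4.\end{cases}$$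
   Context: A nonnegative integer is called evil if its binary expansion contains an even number of 1's, and odious if it contains an odd number of 1's; in particular $0$ is evil. An interval $[a,b)$ means the set of integers $x$ with $a\le x<b$. *)

(* Defs.v *)
From mathcomp Require Import all_boot all_order all_algebra.
Set Implicit Arguments. Unset Strict Implicit. Unset Printing Implicit Defensive.
Import Order.TTheory GRing.Theory Num.Theory.

(* Number of 1's in the binary expansion of n (fuel k >= n suffices). *)
Fixpoint ones_aux (k n : nat) : nat :=
  match k with
  | 0 => 0
  | k'.+1 => if n is 0 then 0 else odd n + ones_aux k' n./2
  end.
Definition ones (n : nat) : nat := ones_aux n n.

Definition evil (n : nat) : bool := ~~ odd (ones n).
Definition odious (n : nat) : bool := odd (ones n).

Definition delta3_odd (a b : nat) : int :=
  (#|[set x : 'I_b | (a <= x)%N && odd (x : nat) && (3 %| (x : nat))%N && evil x]|%:Z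
   - #|[set x : 'I_b | (a <= x)%N && odd (x : nat) && (3 %| (x : nat))%N && odious x]|%:Z)%R.

Example ones_ex : ones 6 = 2. Proof. by []. Qed.

(* Main.v *)
Require Import Defs.
From mathcomp Require Import all_boot all_order all_algebra.
From mathcomp Require Import zify ring lra.
Import Order.TTheory GRing.Theory Num.Theory.
Local Open Scope ring_scope.

Lemma ones_auxE k1 k2 n : (n <= k1)%N -> (n <= k2)%N -> ones_aux k1 n = ones_aux k2 n.
Proof.
elim: k1 k2 n => [|k1 IH] [|k2] [|n] //= H1 H2.
congr (_ + _)%N; apply: IH; rewrite uphalfE leq_half_double -addnn; lia.
Qed.

Lemma onesE n : ones n = if n is 0 then 0%N else (odd n + ones n./2)%N.
Proof.
case: n => [|n] //; rewrite /ones /=; congr (_ + _)%N; apply: ones_auxE => //.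
rewrite uphalfE leq_half_double -addnn; lia.
Qed.

Lemma onesS m : (0 < m)%N -> ones m = (odd m + ones m./2)%N.
Proof. by case: m => // m _; rewrite onesE. Qed.

Lemma ones_double n (b : bool) : ones (b + n.*2) = (b + ones n)%N.
Proof.
case: n => [|n]; first by case: b.
rewrite onesS; last by rewrite doubleS; lia.
rewrite oddD odd_double addbF; congr (_ + ones _)%N; first by case: b.
by case: b; rewrite /= ?add0n ?doubleK ?uphalf_double.
Qed.

Lemma ones_block k c y : (y < 2 ^ k)%N -> ones (c * 2 ^ k + y) = (ones c + ones y)%N.
Proof.
elim: k y => [|k IH] y Hy.
  by move: Hy; rewrite expn0 ltnS leqn0 => /eqP ->; rewrite muln1 !addn0.
have Hy2 : (y./2 < 2 ^ k)%N by rewrite ltn_half_double -mul2n -expnS.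
have -> : (c * 2 ^ k.+1 + y = odd y + (c * 2 ^ k + y./2).*2)%N.
  rewrite -{1}(odd_double_half y) doubleD expnS -!mul2n; lia.
rewrite ones_double IH // -{3}(odd_double_half y) ones_double; lia.
Qed.

Lemma ones0 : ones 0 = 0%N. Proof. by []. Qed.

Lemma cardP b (P : nat -> bool) : #|[set x : 'I_b | P x]| = (\sum_(0 <= x < b) P x)%N.
Proof. rewrite cardsE -sum1_card big_mkcond /= big_mkord; apply eq_bigr => i _; by rewrite unfold_in; case: (P i). Qed.

Definition g (x : nat) : int := (odd x && (3 %| x)%N)%:R * (-1) ^+ ones x.
Definition h (j y : nat) : int := (odd y && (y %% 3 == j)%N)%:R * (-1) ^+ ones y.
Definition T k j : int := \sum_(0 <= y < 2 ^ k) h j y.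

Lemma delta_sum0 a b : delta3_odd a b = \sum_(0 <= x < b) ((a <= x)%N%:R * g x).
Proof.
rewrite /delta3_odd !cardsE -!sum1_card -!natz !natr_sum [X in _ - X]big_mkcond [X in X - _]big_mkcond /=.
rewrite -sumrB big_mkord; apply: eq_bigr => i _.
rewrite !unfold_in /= /g /evil /odious -signr_odd.
by case: (a <= i)%N; case: (odd i); case: (3 %| i)%N; case: (odd (ones i)); rewrite /= ?expr1 ?expr0.
Qed.

Lemma odd_pow2 k : (0 < k)%N -> odd (2 ^ k) = false.
Proof. by case: k => // k _; rewrite expnS oddM. Qed.

Lemma pow2mod3 n : (2 ^ n %% 3 = if odd n then 2 else 1)%N.
Proof.
elim: n => [|n IH] //; rewrite expnS /=; move: IH; case: (odd n) => /= IH; lia.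
Qed.

Lemma T_rec k j j' : (0 < k)%N -> (forall z, ((2 ^ k + z) %% 3 == j) = (z %% 3 == j'))%N ->
  T k.+1 j = T k j - T k j'.
Proof.
move=> Hk Hz; rewrite /T expnS mul2n -addnn (big_cat_nat (leq0n _) (leq_addr _ _)) /=.
congr (_ + _); rewrite -{1}(add0n (2 ^ k)%N) big_addn addnK -sumrN.
apply: eq_big_nat => z /andP[_ Hz']; rewrite /h (addnC z) Hz oddD odd_pow2 // addFb.
have := @ones_block _ 1 _ Hz'; rewrite mul1n => ->.
by rewrite exprD expr1 mulN1r mulrN.
Qed.

Lemma block c m j' : (0 < m)%N -> (forall y, (3 %| (c * 2 ^ m + y)) = (y %% 3 == j'))%N ->
  \sum_(c * 2 ^ m <= x < c * 2 ^ m + 2 ^ m) g x = (-1) ^+ ones c * T m j'.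
Proof.
move=> Hm Hc; rewrite -{1}(add0n (c * 2 ^ m)%N) big_addn addKn /T mulr_sumr.
apply: eq_big_nat => y /andP[_ Hy]; rewrite /g /h addnC Hc oddD oddM odd_pow2 // andbF addFb.
by rewrite ones_block // exprD mulrCA.
Qed.

Lemma T1 : T 1 0 = 0 /\ T 1 1 = -1 /\ T 1 2 = 0.
Proof.
have o1 : ones 1 = 1%N by [].
rewrite /T /h !big_nat_recr //= !big_geq // o1 expr1 !mul0r ?mul1r ?add0r ?addr0.
Qed.

Lemma Tstep k : (0 < k)%N ->
 T k.+1 0 = T k 0 - T k (if odd k then 1 else 2)%N /\
 T k.+1 1 = T k 1 - T k (if odd k then 2 else 0)%N /\
 T k.+1 2 = T k 2 - T k (if odd k then 0 else 1)%N.
Proof.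
move=> Hk; have H := pow2mod3 k.
split; [|split]; apply: T_rec => // z; move: H; case: (odd k) => /= H; apply/eqP/eqP; lia.
Qed.

Lemma Tvals s :
 T s.+1.*2 0 = 3 ^+ s /\ T s.+1.*2 1 = - 3 ^+ s /\ T s.+1.*2 2 = 0 /\
 T s.+1.*2.+1 0 = 3 ^+ s /\ T s.+1.*2.+1 1 = - (2 * 3 ^+ s) /\ T s.+1.*2.+1 2 = 3 ^+ s.
Proof.
elim: s => [|s IH].
  have [a0 [a1 a2]] := T1.
  have [b0 [b1 b2]] := @Tstep 1 isT. have [c0 [c1 c2]] := @Tstep 2 isT.
  rewrite /= in b0 b1 b2 c0 c1 c2 *.
  rewrite c0 c1 c2 b0 b1 b2 a0 a1 a2 expr0; split; [|split; [|split; [|split; [|split]]]]; lia.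
have [a0 [a1 [a2 [a3 [a4 a5]]]]] := IH.
have [b0 [b1 b2]] := @Tstep s.+1.*2.+1 isT. have [c0 [c1 c2]] := @Tstep s.+1.*2.+2 isT.
rewrite /= odd_double /= in b0 b1 b2 c0 c1 c2.
have e : s.+2.*2 = s.+1.*2.+2 by rewrite doubleS.
rewrite e c0 c1 c2 b0 b1 b2 a3 a4 a5 exprS.
split; [|split; [|split; [|split; [|split]]]]; lia.
Qed.

Lemma Teven m : (2 <= m)%N -> ~~ odd m ->
  T m 0 = 3 ^+ ((m - 2) %/ 2) /\ T m 1 = - 3 ^+ ((m - 2) %/ 2) /\ T m 2 = 0.
Proof.
move=> H2 Ho; have [e1 e2] : ((m - 2) %/ 2 = m./2 - 1 /\ m = (m./2 - 1).+1.*2)%N by lia.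
have [a0 [a1 [a2 _]]] := Tvals (m./2 - 1); rewrite -e2 in a0 a1 a2; by rewrite e1.
Qed.

Lemma Todd m : (3 <= m)%N -> odd m ->
  T m 0 = 3 ^+ ((m - 3) %/ 2) /\ T m 1 = - (2 * 3 ^+ ((m - 3) %/ 2)) /\ T m 2 = 3 ^+ ((m - 3) %/ 2).
Proof.
move=> H2 Ho; have [e1 e2] : ((m - 3) %/ 2 = m./2 - 1 /\ m = (m./2 - 1).+1.*2.+1)%N by lia.
have [_ [_ [_ [a0 [a1 a2]]]]] := Tvals (m./2 - 1); rewrite -e2 in a0 a1 a2; by rewrite e1.
Qed.

Lemma delta_block c m j' : (0 < m)%N -> (forall y, (3 %| (c * 2 ^ m + y)) = (y %% 3 == j'))%N ->
  delta3_odd (c * 2 ^ m) (c * 2 ^ m + 2 ^ m) = (-1) ^+ ones c * T m j'.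
Proof.
move=> Hm Hc; rewrite delta_sum0 (big_cat_nat (leq0n _) (leq_addr _ _)) /=.
rewrite [X in X + _]big_nat big1 ?add0r; last first.
  by move=> i /andP[_ Hi]; rewrite leqNgt Hi /= mul0r.
rewrite -(@block c m j' Hm Hc); apply: eq_big_nat => i /andP[Hi _]; by rewrite Hi mul1r.
Qed.

Lemma delta_gen A c m j' : (0 < m)%N -> A = (c * 2 ^ m)%N ->
  (forall y, (3 %| (A + y)) = (y %% 3 == j'))%N ->
  delta3_odd A (A + 2 ^ m) = (-1) ^+ ones c * T m j'.
Proof. by move=> Hm -> Hc; apply: delta_block. Qed.

Lemma ones_pow k : ones (2 ^ k) = 1%N.
Proof. rewrite -[(2 ^ k)%N]addn0 -[(2 ^ k)%N]mul1n ones_block //; exact: expn_gt0. Qed.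

Lemma ones_5pow k : ones (5 * 2 ^ k) = 2%N.
Proof. rewrite -[(5 * 2 ^ k)%N]addn0 ones_block //; exact: expn_gt0. Qed.



Lemma part2 n m j' : (m <= n)%N -> (0 < m)%N ->
  (forall y, (3 %| (2 ^ n + y)) = (y %% 3 == j'))%N ->
  delta3_odd (2 ^ n) (2 ^ n + 2 ^ m) = - T m j'.
Proof.
move=> Hmn Hm Hc; rewrite (@delta_gen _ (2 ^ (n - m)) _ j' Hm).
- by rewrite ones_pow expr1 mulN1r.
- by rewrite -expnD subnK.
- exact: Hc.
Qed.

Lemma part3 n m j' : (m + 2 <= n)%N -> (0 < m)%N ->
  (forall y, (3 %| (2 ^ n + 2 ^ (n - 2) + y)) = (y %% 3 == j'))%N ->
  delta3_odd (2 ^ n + 2 ^ (n - 2)) (2 ^ n + 2 ^ (n - 2) + 2 ^ m) = T m j'.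
Proof.
move=> Hmn Hm Hc; rewrite (@delta_gen _ (5 * 2 ^ (n - 2 - m)) _ j' Hm).
- by rewrite ones_5pow expr2 mulN1r opprK mul1r.
- have e0 : (2 ^ n = 2 ^ (n - 2) * 2 ^ 2)%N by rewrite -expnD subnK //; lia.
  have e2 : (2 ^ (n - 2) = 2 ^ (n - 2 - m) * 2 ^ m)%N by rewrite -expnD subnK //; lia.
  rewrite e0 e2; set P := (2 ^ (n - 2 - m))%N; set Q := (2 ^ m)%N.
  rewrite (_ : 2 ^ 2 = 4)%N //; lia.
- exact: Hc.
Qed.

Lemma res1 n y : (3 %| (2 ^ n + y))%N = (y %% 3 == if odd n then 1 else 2)%N.
Proof. rewrite /dvdn; have := pow2mod3 n; case: (odd n) => H; apply/eqP/eqP; lia. Qed.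

Lemma res3 n y : (2 <= n)%N ->
  (3 %| (2 ^ n + 2 ^ (n - 2) + y))%N = (y %% 3 == if odd n then 2 else 1)%N.
Proof.
move=> Hn; have o : odd (n - 2) = odd n by lia.
rewrite /dvdn; have := pow2mod3 n; have := pow2mod3 (n - 2); rewrite o.
case: (odd n) => H1 H2; apply/eqP/eqP; lia.
Qed.

Theorem theorem2 :
  (forall n : nat, (2 <= n)%N ->
     delta3_odd 0 (2 ^ n) = 3 ^+ (n./2 - 1)%N)
  /\
  (forall n m : nat,
     (~~ odd n -> ~~ odd m -> (2 <= m)%N -> (m <= n - 2)%N ->
        delta3_odd (2 ^ n) (2 ^ n + 2 ^ m) = 0)
  /\ (odd n -> ~~ odd m -> (2 <= m)%N -> (m <= n - 1)%N ->
        delta3_odd (2 ^ n) (2 ^ n + 2 ^ m) = 3 ^+ ((m - 2) %/ 2)%N)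
  /\ (~~ odd n -> odd m -> (3 <= m)%N -> (m <= n - 1)%N ->
        delta3_odd (2 ^ n) (2 ^ n + 2 ^ m) = - 3 ^+ ((m - 3) %/ 2)%N)
  /\ (odd n -> odd m -> (3 <= m)%N -> (m <= n - 2)%N ->
        delta3_odd (2 ^ n) (2 ^ n + 2 ^ m) = 2 * 3 ^+ ((m - 3) %/ 2)%N))
  /\
  (forall n m : nat,
     (~~ odd n -> ~~ odd m -> (2 <= m)%N -> (m <= n - 4)%N ->
        delta3_odd (2 ^ n + 2 ^ (n - 2)) (2 ^ n + 2 ^ (n - 2) + 2 ^ m)
          = - 3 ^+ ((m - 2) %/ 2)%N)
  /\ (odd n -> ~~ odd m -> (2 <= m)%N -> (m <= n - 3)%N ->
        delta3_odd (2 ^ n + 2 ^ (n - 2)) (2 ^ n + 2 ^ (n - 2) + 2 ^ m) = 0)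
  /\ (~~ odd n -> odd m -> (3 <= m)%N -> (m <= n - 3)%N ->
        delta3_odd (2 ^ n + 2 ^ (n - 2)) (2 ^ n + 2 ^ (n - 2) + 2 ^ m)
          = - (2 * 3 ^+ ((m - 3) %/ 2)%N))
  /\ (odd n -> odd m -> (3 <= m)%N -> (m <= n - 4)%N ->
        delta3_odd (2 ^ n + 2 ^ (n - 2)) (2 ^ n + 2 ^ (n - 2) + 2 ^ m)
          = 3 ^+ ((m - 3) %/ 2)%N)).
Proof.
split; [|split].
- move=> n Hn.
  have := @delta_gen 0 0 n 0 (ltn_trans (ltnSn 0) Hn) (erefl _) (fun y => erefl _).
  rewrite add0n => ->; rewrite expr0 mul1r.
  case Ho: (odd n).
  + have H3 : (3 <= n)%N by lia.
    have [-> _] := Todd n H3 Ho; congr (_ ^+ _); lia.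
  + have [-> _] := Teven n Hn (negbT Ho); congr (_ ^+ _); lia.
- move=> n m; split; [|split; [|split]] => Hn Hm H1 H2.
  + rewrite (@part2 n m 2); [|lia|lia|move=> y; rewrite res1 (negbTE Hn) //].
    by have [_ [_ ->]] := Teven m H1 Hm; rewrite oppr0.
  + rewrite (@part2 n m 1); [|lia|lia|move=> y; rewrite res1 Hn //].
    by have [_ [-> _]] := Teven m H1 Hm; rewrite opprK.
  + rewrite (@part2 n m 2); [|lia|lia|move=> y; rewrite res1 (negbTE Hn) //].
    by have [_ [_ ->]] := Todd m H1 Hm.
  + rewrite (@part2 n m 1); [|lia|lia|move=> y; rewrite res1 Hn //].
    by have [_ [-> _]] := Todd m H1 Hm; rewrite opprK.
- move=> n m; split; [|split; [|split]] => Hn Hm H1 H2.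
  + rewrite (@part3 n m 1); [|lia|lia|move=> y; rewrite res3 ?(negbTE Hn) //; lia].
    by have [_ [-> _]] := Teven m H1 Hm.
  + rewrite (@part3 n m 2); [|lia|lia|move=> y; rewrite res3 ?Hn //; lia].
    by have [_ [_ ->]] := Teven m H1 Hm.
  + rewrite (@part3 n m 1); [|lia|lia|move=> y; rewrite res3 ?(negbTE Hn) //; lia].
    by have [_ [-> _]] := Todd m H1 Hm.
  + rewrite (@part3 n m 2); [|lia|lia|move=> y; rewrite res3 ?Hn //; lia].
    by have [_ [_ ->]] := Todd m H1 Hm.
Qed.
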